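(* Let $n_{\mathrm{in}}\in\mathbb{N}$, let $\Omega\subset\mathbb{R}^{n_{\mathrm{in}}}$ be compact and let $f:\Omega\to\mathbb{R}$ be continuous. For every $\epsilon>0$ there exists a discrete-time LIF-SNN $\Phi$ with direct encoding, membrane potential output, $L=2$ hidden layers and latency $T=1$ such that $\sup_{x\in\Omega}|R(\Phi)(x)-f(x)|\le\epsilon$. Moreover, if $f$ is $\Gamma$-Lipschitz with respect to $\|\cdot\|_\infty$ (i.e. $|f(x)-f(y)|\le\Gamma\|x-y\|_\infty$ for all $x,y\in\Omega$), then $\Phi$ can be chosen with hidden-layer widths $n_1=\Big(\max\Big\{\Big\lceil\frac{\operatorname{diam}_\infty(\Omega)}{\epsilon}\Gamma\Big\rceil,1\Big\}+1\Big)n_{\mathrm{in}}$ and $n_2=\max\Big\{\Big\lceil\frac{\operatorname{diam}_\infty(\Omega)}{\epsilon}\Gamma\Big\rceil^{n_{\mathrm{in}}},1\Big\}$, where $\operatorname{diam}_\infty(\Omega)=\sup_{x,y\in\Omega}\|x-y\|_\infty$.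
   Context: A discrete-time LIF-SNN $\Phi$ with $L$ hidden layers of widths $n_1,\dots,n_L$, input dimension $n_0=n_{\mathrm{in}}$, output dimension $n_{\mathrm{out}}$ and latency $T\in\mathbb{N}$ has parameters $W^\ell\in\mathbb{R}^{n_\ell\times n_{\ell-1}}$, $b^\ell\in\mathbb{R}^{n_\ell}$, $u^\ell(0)\in\mathbb{R}^{n_\ell}$, $\beta^\ell\in[0,1]$, $\vartheta^\ell>0$ ($\ell\in[L]$). With direct encoding, the initial spike activations are $s^0(t)=x$ for all $t\in[T]$, where $x\in\mathbb{R}^{n_{\mathrm{in}}}$ is the input. For $\ell\in[L]$, $t\in[T]$: $s^\ell(t)=H(\beta^\ell u^\ell(t-1)+W^\ell s^{\ell-1}(t)+b^\ell-\vartheta^\ell\mathbf{1})$ and $u^\ell(t)=\beta^\ell u^\ell(t-1)+W^\ell s^{\ell-1}(t)+b^\ell-\vartheta^\ell s^\ell(t)$, with $H$ the entrywise Heaviside function ($H(z)=1$ if $z\ge0$, else $0$). With membrane potential output, the realization is $R(\Phi)(x)=\sum_{t=1}^T a_t\,(V s^L(t)+c)\in\mathbb{R}^{n_{\mathrm{out}}}$ for decoder parameters $a\in\mathbb{R}^T$, $V\in\mathbb{R}^{n_{\mathrm{out}}\times n_L}$, $c\in\mathbb{R}^{n_{\mathrm{out}}}$. Here $n_{\mathrm{out}}=1$. *)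

(* Defs.v *)
From HB Require Import structures.
From mathcomp Require Import all_boot all_order all_algebra.
From mathcomp Require Import all_classical all_reals all_analysis.
Set Implicit Arguments. Unset Strict Implicit. Unset Printing Implicit Defensive.
Import Order.TTheory GRing.Theory Num.Theory.
Import numFieldNormedType.Exports.
Local Open Scope ring_scope.
Local Open Scope classical_set_scope.

Definition dims (nin : nat) (w : nat -> nat) (l : nat) : nat :=
  if l is l'.+1 then w l' else nin.

Definition heav (R : realType) (m : nat) (z : 'cV[R]_m) : 'cV[R]_m :=
  \col_i (if 0 <= z i ord0 then 1 else 0).

(* A discrete-time LIF-SNN with input dim nin, L hidden layers, latency T,
   output dimension 1 (membrane potential output).  Index l : nat of the
   layer-dependent fields stands for layer l+1 of the paper
   (W l = W^{l+1}, bias l = b^{l+1}, u0 l = u^{l+1}(0), beta l = beta^{l+1},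
   theta l = vartheta^{l+1}); adec t = a_{t+1}.  Values for l >= L or t >= T
   are irrelevant. *)
Record LIFSNN (R : realType) (nin L T : nat) := MkLIFSNN {
  width : nat -> nat;
  W : forall l : nat, 'M[R]_(dims nin width l.+1, dims nin width l);
  bias : forall l : nat, 'cV[R]_(dims nin width l.+1);
  u0 : forall l : nat, 'cV[R]_(dims nin width l.+1);
  beta : nat -> R;
  theta : nat -> R;
  adec : nat -> R;
  Vdec : 'rV[R]_(dims nin width L);
  cdec : R
}.
Arguments width {R nin L T}.
Arguments W {R nin L T}.
Arguments bias {R nin L T}.
Arguments u0 {R nin L T}.
Arguments beta {R nin L T}.
Arguments theta {R nin L T}.
Arguments adec {R nin L T}.
Arguments Vdec {R nin L T}.
Arguments cdec {R nin L T}.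

Definition LIF_valid (R : realType) nin L T (N : LIFSNN R nin L T) : Prop :=
  forall l : nat, (l < L)%N -> 0 <= beta N l <= 1 /\ 0 < theta N l.

Section Dynamics.
Variables (R : realType) (nin L T : nat) (N : LIFSNN R nin L T).

Local Notation dim := (dims nin (width N)).

Definition preact (up : forall l, 'cV[R]_(dim l.+1)) (l : nat)
  (s : 'cV[R]_(dim l)) : 'cV[R]_(dim l.+1) :=
  beta N l *: up l + W N l *m s + bias N l.

(* spikes up x l = s^l(t), given the potentials up = u(t-1) of all layers
   and the (direct-encoded) input s^0(t) = x. *)
Fixpoint spikes (up : forall l, 'cV[R]_(dim l.+1)) (x : 'cV[R]_nin) (l : nat)
  {struct l} : 'cV[R]_(dim l) :=
  match l return 'cV[R]_(dim l) with
  | 0 => x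
  | l'.+1 => heav (preact up (spikes up x l') - theta N l' *: const_mx 1)
  end.

Definition newpot (up : forall l, 'cV[R]_(dim l.+1)) (x : 'cV[R]_nin)
  (l : nat) : 'cV[R]_(dim l.+1) :=
  preact up (spikes up x l) - theta N l *: spikes up x l.+1.

(* pot x t l = u^{l+1}(t) *)
Fixpoint pot (x : 'cV[R]_nin) (t : nat) : forall l, 'cV[R]_(dim l.+1) :=
  match t with
  | 0 => u0 N
  | t'.+1 => newpot (pot x t') x
  end.

Definition realize (x : 'cV[R]_nin) : R :=
  \sum_(t < T) adec N t * ((Vdec N *m spikes (pot x t) x L) ord0 ord0 + cdec N).

End Dynamics.

Definition normInf (R : realType) (n : nat) (x : 'cV[R]_n) : R :=
  \big[Num.max/0]_(i < n) `|x i ord0|.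

Definition diamInf (R : realType) (n : nat) (Om : set 'cV[R]_n) : R :=
  sup [set d | exists x y, Om x /\ Om y /\ d = normInf (x - y)].

(* Main.v *)
Require Import Defs.
From HB Require Import structures.
From mathcomp Require Import all_boot all_order all_algebra.
From mathcomp Require Import all_classical all_reals all_analysis.
From mathcomp Require Import ring lra zify.
Import Order.TTheory GRing.Theory Num.Theory.
Import numFieldNormedType.Exports.
Set Implicit Arguments. Unset Strict Implicit. Unset Printing Implicit Defensive.
Local Open Scope ring_scope.
Local Open Scope classical_set_scope.
Definition dec (k nin : nat) (p : 'I_(k.+1 * nin)) : 'I_k.+1 * 'I_nin :=
  enum_val (cast_ord (esym (mxvec_cast k.+1 nin)) p).

Lemma sum_dec (R : realType) k nin (F : 'I_k.+1 -> 'I_nin -> R) :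
  \sum_(p < k.+1 * nin) F (dec p).1 (dec p).2 = \sum_(j < k.+1) \sum_(i < nin) F j i.
Proof.
rewrite (reindex _ (curry_mxvec_bij _ _)) /= pair_bigA; apply: eq_bigr => -[j i] _.
by rewrite /dec /mxvec_index cast_ordK enum_rankK.
Qed.

Definition scnt (R : realType) (k : nat) (a h v : R) : nat :=
  \sum_(1 <= j < k) (((a + j%:R * h <= v)%R : bool) : nat).

Definition scode (R : realType) (nin k : nat) (a : 'I_nin -> R) (h : R) (x : 'cV[R]_nin) : nat :=
  \sum_(i < nin) scnt k (a i) h (x i ord0) * k ^ i.

Definition netw (nin k : nat) (l : nat) : nat := if l is 0 then (k.+1 * nin)%N else (k ^ nin)%N.

Definition mkW (R : realType) nin k (a : 'I_nin -> R) (h : R) :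
  forall l : nat, 'M[R]_(dims nin (netw nin k) l.+1, dims nin (netw nin k) l) :=
  fun l => match l return 'M[R]_(dims nin (netw nin k) l.+1, dims nin (netw nin k) l) with
  | 0 => \matrix_(p, q) (((dec p).2 == q)%:R)
  | 1 => \matrix_(r, p) (if (0 < (dec p).1 < k)%N then (k ^ (dec p).2)%N%:R else 0)
  | _ => 0 end.

Definition mkb (R : realType) nin k (a : 'I_nin -> R) (h : R) :
  forall l : nat, 'cV[R]_(dims nin (netw nin k) l.+1) :=
  fun l => match l return 'cV[R]_(dims nin (netw nin k) l.+1) with
  | 0 => \col_p (1 - (a (dec p).2 + ((dec p).1)%:R * h))
  | 1 => \col_r (1 - (r : nat)%:R)
  | _ => 0 end.

Definition mknet (R : realType) nin k (a : 'I_nin -> R) (h : R) (g : nat -> R) : LIFSNN R nin 2 1 :=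
  @MkLIFSNN R nin 2 1 (netw nin k) (@mkW R nin k a h) (@mkb R nin k a h) (fun _ => 0) (fun _ => 0) (fun _ => 1)
    (fun _ => 1) (\row_r (g r - g r.-1)) (g 0%N).

Lemma mknet_valid (R : realType) nin k (a : 'I_nin -> R) (h : R) (g : nat -> R) : LIF_valid (mknet k a h g).
Proof. by move=> l _; rewrite /= lexx ler01. Qed.

Lemma s1E (R : realType) nin k (a : 'I_nin -> R) h g x p :
  @spikes R nin 2 1 (mknet k a h g) (@pot R nin 2 1 (mknet k a h g) x 0) x 1 p ord0 =
  if a (dec p).2 + ((dec p).1)%:R * h <= x (dec p).2 ord0 then 1 else 0.
Proof.
rewrite /= /heav /preact /= !mxE.
rewrite (bigD1 (dec p).2) //= big1 => [|j /negbTE hj]; last by rewrite mxE eq_sym hj mul0r.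
rewrite mxE eqxx mul1r mul0r add0r addr0 mul1r.
congr (if _ then _ else _).
by apply/idP/idP => H; lra.
Qed.

Lemma code_sum (R : realType) nin k (a : 'I_nin -> R) h (x : 'cV[R]_nin) :
  \sum_(p < k.+1 * nin) (if (0 < (dec p).1 < k)%N then (k ^ (dec p).2)%N%:R else 0) *
     (if a (dec p).2 + ((dec p).1)%:R * h <= x (dec p).2 ord0 then 1 else 0)
  = (scode k a h x)%:R :> R.
Proof.
pose F (j : 'I_k.+1) (i : 'I_nin) : R := (if (0 < j < k)%N then (k ^ i)%N%:R else 0) *
     (if a i + (j : nat)%:R * h <= x i ord0 then 1 else 0).
have -> := sum_dec F.
rewrite exchange_big /scode natr_sum; apply: eq_bigr => i _.
rewrite /F /scnt big_ord_recl /= mulr0n !mul0r add0r.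
case: k F => [|k'] F; first by rewrite big_ord0 big_geq.
rewrite big_ord_recr /= /bump !leq0n !add1n ltnn mul0r addr0.
rewrite big_add1 /= big_mkord natrM natr_sum mulr_suml; apply: eq_bigr => j _.
rewrite ltnS ltn_ord /=.
by rewrite add1n; case: ifP => _; rewrite ?mul1r ?mul0r ?mulr1 ?mulr0.
Qed.

Lemma s2E (R : realType) nin k (a : 'I_nin -> R) h g (x : 'cV[R]_nin) r :
  @spikes R nin 2 1 (mknet k a h g) (@pot R nin 2 1 (mknet k a h g) x 0) x 2 r ord0 =
  if (r <= scode k a h x)%N then 1 else 0.
Proof.
set N := mknet k a h g.
set s1 := @spikes R nin 2 1 N (@pot R nin 2 1 N x 0) x 1.
have -> : @spikes R nin 2 1 N (@pot R nin 2 1 N x 0) x 2 = heav (@preact R nin 2 1 N (@pot R nin 2 1 N x 0) 1 s1 - theta N 1 *: const_mx 1) by [].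
rewrite /heav /preact !mxE.
under eq_bigr => p _ do rewrite /s1 s1E /= mxE.
rewrite /= code_sum mulr0 add0r mul1r.
have -> : (scode k a h x)%:R + (1 - (r : nat)%:R) - 1 = (scode k a h x)%:R - (r : nat)%:R :> R by ring.
rewrite subr_ge0 ler_nat.
by [].
Qed.

Lemma tele (R : realType) (g : nat -> R) n : \sum_(r < n.+1) (g r - g r.-1) = g n - g 0%N.
Proof.
elim: n => [|n IH]; first by rewrite big_ord1.
by rewrite big_ord_recr /= IH; ring.
Qed.

Lemma tele2 (R : realType) (g : nat -> R) c K : (c < K)%N ->
  \sum_(r < K) (g r - g r.-1) * (if (r <= c)%N then 1 else 0) = g c - g 0%N.
Proof.
elim: K => // K IH hc; rewrite big_ord_recr /=.
case: (ltngtP c K) => hcK.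
- by rewrite IH // mulr0 addr0.
- by move: hc; rewrite ltnS leqNgt hcK.
- rewrite mulr1; subst c.
  rewrite -tele [RHS]big_ord_recr /=; apply: (congr1 (fun z => z + _)).
  apply: eq_bigr => r _.
  by rewrite (leq_trans (ltnW (ltn_ord r))) ?leqnSn // mulr1.
Qed.

Lemma mknet_realize (R : realType) nin k (a : 'I_nin -> R) h g (x : 'cV[R]_nin) :
  (scode k a h x < k ^ nin)%N ->
  realize (mknet k a h g) x = g (scode k a h x).
Proof.
move=> hlt; rewrite /realize big_ord1 mul1r !mxE.
under eq_bigr => r _ do rewrite s2E mxE.
by rewrite (tele2 _ hlt) /= subrK.
Qed.

Local Open Scope nat_scope.
Lemma digits_lt k n (m : 'I_n -> nat) : (forall i, m i < k) ->
  \sum_(i < n) m i * k ^ i < k ^ n.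
Proof.
elim: n m => [|n IH] m hm; first by rewrite big_ord0 expn0.
rewrite big_ord_recr /=.
have h1 := IH (fun i => m (widen_ord (leqnSn n) i)) (fun i => hm _).
apply: (@leq_trans (k ^ n + m ord_max * k ^ n)); first by rewrite ltn_add2r.
by rewrite -mulSn expnS leq_mul2r hm orbT.
Qed.

Lemma digits_inj k n (m m' : 'I_n -> nat) : (forall i, m i < k) -> (forall i, m' i < k) ->
  \sum_(i < n) m i * k ^ i = \sum_(i < n) m' i * k ^ i -> forall i, m i = m' i.
Proof.
elim: n m m' => [|n IH] m m' hm hm'; first by move=> _ [].
rewrite !big_ord_recl /= !expn0 !muln1.
have e (mm : 'I_n.+1 -> nat) : \sum_(i < n) mm (lift ord0 i) * k ^ bump 0 i
    = k * \sum_(i < n) mm (lift ord0 i) * k ^ i.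
  rewrite big_distrr /=; apply: eq_bigr => i _.
  by rewrite /bump leq0n add1n expnS mulnCA.
rewrite !e => E.
have e0 : m ord0 = m' ord0.
  have := congr1 (modn^~ k) E.
  by rewrite (addnC (m _)) (addnC (m' _)) !(mulnC k) !modnMDl !modn_small.
have kpos : 0 < k by apply: leq_ltn_trans (hm ord0).
move: E; rewrite e0 => /addnI /eqP; rewrite eqn_pmul2l // => /eqP E.
have IH' := IH _ _ (fun i => hm _) (fun i => hm' _) E.
move=> i; case: (unliftP ord0 i) => [j ->|->] //; exact: IH'.

Qed.

Local Open Scope ring_scope.

Lemma sum_lt_nat (m n j : nat) (b c : nat -> nat) : (m <= j < n)%N ->
  (forall i, b i <= c i)%N -> (b j < c j)%N ->
  (\sum_(m <= i < n) b i < \sum_(m <= i < n) c i)%N.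
Proof.
move=> /andP[mj jn] hle hlt.
rewrite !(big_cat_nat mj (ltnW jn)) /= !(big_ltn jn).
rewrite -addnS; apply: leq_add; first exact: leq_sum.
rewrite -addSn; apply: leq_add => //; exact: leq_sum.
Qed.

Lemma cell (R : realType) k (a h v w : R) : 0 < h -> a <= v -> v <= w ->
  w <= a + k%:R * h -> scnt k a h v = scnt k a h w -> w - v <= h.
Proof.
move=> h0 av vw wk E; rewrite leNgt; apply/negP => hlt.
have t0 : 0 <= (v - a) / h by rewrite divr_ge0 // ?subr_ge0 // ltW.
have /andP[tl tu] := truncn_itv t0.
set j := Num.truncn ((v - a) / h) in tl tu.
have H1 : v < a + j.+1%:R * h.
  by move: tu; rewrite ltr_pdivrMr // => ?; lra.
have H2 : a + j.+1%:R * h <= w.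
  move: tl; rewrite ler_pdivlMr // => ?; rewrite -addn1 natrD mulrDl mul1r; lra.
have H3 : (j.+1 < k)%N.
  rewrite -(ltr_nat R) -(ltr_pM2r h0).
  move: tl; rewrite ler_pdivlMr // => ?; rewrite -addn1 natrD mulrDl mul1r; lra.
move/eqP: E; apply/negP; rewrite neq_ltn; apply/orP; left.
apply: (@sum_lt_nat 1 k j.+1) => //.
- move=> i; case: (a + i%:R * h <= v) /idP => //= hi.
  by have -> : a + i%:R * h <= w by apply: le_trans vw.
- have -> : (a + j.+1%:R * h <= v) = false by apply/negbTE; rewrite -ltNge.
  by rewrite H2.
Qed.

Lemma scnt_lt (R : realType) k (a h v : R) : (0 < k)%N -> (scnt k a h v < k)%N.
Proof.
move=> k0; apply: (@leq_ltn_trans (\sum_(1 <= j < k) 1)%N).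
  by apply: leq_sum => j _; case: (_ <= _).
by rewrite sum_nat_const_nat muln1 subn1 prednK.
Qed.

Lemma scode_lt (R : realType) nin k (a : 'I_nin -> R) h (x : 'cV[R]_nin) : (0 < k)%N ->
  (scode k a h x < k ^ nin)%N.
Proof. by move=> k0; apply: digits_lt => i; apply: scnt_lt. Qed.

Lemma final (R : realType) nin (Om : set 'cV[R]_nin) (f : 'cV[R]_nin -> R) (eps : R) (k : nat) (h : R) :
  (0 < k)%N -> 0 < h ->
  (forall x y, Om x -> Om y -> forall i, y i ord0 - x i ord0 <= k%:R * h) ->
  (forall x y, Om x -> Om y -> (forall i, `|x i ord0 - y i ord0| <= h) -> `|f x - f y| <= eps) ->
  exists N : LIFSNN R nin 2 1, LIF_valid N /\ (forall x, Om x -> `|realize N x - f x| <= eps) /\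
     width N 0 = (k.+1 * nin)%N /\ width N 1 = (k ^ nin)%N.
Proof.
move=> k0 h0 hbox hP.
have [[x0 Ox0]|Oe] := pselect (exists x, Om x); last first.
  exists (mknet k (fun _ : 'I_nin => 0) h (fun _ => 0)); split; first exact: mknet_valid.
  by split => // x Ox; exfalso; apply: Oe; exists x.
pose S i := [set r | exists2 y, Om y & r = y i ord0].
pose a i := inf (S i).
have aS : forall x, Om x -> forall i, a i <= x i ord0 /\ x i ord0 <= a i + k%:R * h.
  move=> x Ox i; split.
    apply: ge_inf; last by exists x.
    exists (x0 i ord0 - k%:R * h) => r [y Oy ->].
    by have := hbox _ _ Oy Ox0 i; lra.
  rewrite -lerBlDr; apply: lb_le_inf; first by exists (x i ord0), x.
  move=> r [y Oy ->]; by have := hbox _ _ Oy Ox i; lra.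
pose g (l : nat) : R := match pselect (exists y, Om y /\ scode k a h y = l) with
  | left H => f (projT1 (cid H)) | right _ => 0 end.
exists (mknet k a h g); split; first exact: mknet_valid.
split => // x Ox.
rewrite mknet_realize ?scode_lt // /g.
case: pselect => [H|H]; last by exfalso; apply: H; exists x.
case: (cid H) => y [Oy Ey] /=.
apply: hP => // i.
have Ei : scnt k (a i) h (x i ord0) = scnt k (a i) h (y i ord0).
  apply: (@digits_inj k nin (fun i => scnt k (a i) h (x i ord0)) (fun i => scnt k (a i) h (y i ord0))).
  - by move=> j; apply: scnt_lt.
  - by move=> j; apply: scnt_lt.
  - by have := Ey; rewrite /scode => ->.
have [ax xa] := aS x Ox i; have [ay ya] := aS y Oy i.
case: (lerP (x i ord0) (y i ord0)) => hxy.
  exact: (cell h0 ax hxy ya Ei).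
apply: (cell h0 ay (ltW hxy) xa); by rewrite Ei.
Qed.

Lemma UC (R : realType) n (Om : set 'cV[R]_n) (f : 'cV[R]_n -> R) :
  compact Om -> {within Om, continuous f} -> forall e, 0 < e ->
  exists2 d, 0 < d & forall x y, Om x -> Om y -> `|x - y| < d -> `|f x - f y| <= e.
Proof.
move=> cOm fc e e0.
have cont x : Om x -> exists2 r, 0 < r &
    forall w, Om w -> `|x - w| < r -> `|f x - f w| < e / 2.
  move=> Ox; have := (subspace_continuousP _ _).1 fc x Ox.
  move/cvgrPdist_lt => /(_ (e / 2)); rewrite divr_gt0 // => /(_ isT) H.
  have /nbhs_ballP[r r0 Hr] := H.
  exists r => // w Ow xw; apply: Hr => //.
  by rewrite -ball_normE /ball_ /=.
have cover : near_covering_within Om.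
  by apply/near_covering_withinP; apply/compact_near_coveringP.
have H := cover R (0:R)^'+
  (fun d y => forall z, Om z -> `|y - z| < d -> `|f y - f z| <= e) _.
have {H} H : \forall d \near (0:R)^'+, Om `<=`
    (fun y => forall z, Om z -> `|y - z| < d -> `|f y - f z| <= e).
  apply: H => x Ox; have [r r0 Hr] := cont x Ox.
  near=> y d => /= Oy z Oz yz.
  have xy : `|x - y| < r / 2.
    near: y; apply/nbhs_ballP; exists (r / 2); first by rewrite /= divr_gt0.
    by move=> y; rewrite -ball_normE /ball_ /=; exact: id.
  have dr : d < r / 2 by near: d; apply: nbhs_right_lt; lra.
  have xz : `|x - z| < r.
    rewrite (_ : x - z = (x - y) + (y - z)); last by rewrite addrA subrK.
    by apply: le_lt_trans (ler_normD _ _) _; lra.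
  have h1 : `|f x - f y| < e / 2 by apply: Hr => //; lra.
  have h2 := Hr z Oz xz.
  rewrite (_ : f y - f z = (f x - f z) - (f x - f y)); last by ring.
  apply: le_trans (ler_normB _ _) _; lra.
have [d [d0 Hd]] := filter_ex (filterI (nbhs_right_gt (0:R)) H).
by exists d => // x y Ox Oy; apply: Hd.
Unshelve. all: by end_near.
Qed.

Lemma coord_le_norm (R : realType) n (x : 'cV[R]_n) i : `|x i ord0| <= `|x|.
Proof.
rewrite [leRHS]/Num.norm /= mx_normrE.
exact: (@le_bigmax _ _ _ 0 (fun ij : 'I_n * 'I_1 => `|x ij.1 ij.2|) (i, ord0)).
Qed.

Lemma norm_le_coord (R : realType) n (x : 'cV[R]_n) d : 0 <= d ->
  (forall i, `|x i ord0| <= d) -> `|x| <= d.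
Proof.
move=> d0 H; rewrite [leLHS]/Num.norm /= mx_normrE.
apply: bigmax_le => // -[i j] _ /=; by rewrite (ord1 j).
Qed.

Lemma normInf_ge (R : realType) n (x : 'cV[R]_n) i : `|x i ord0| <= normInf x.
Proof. exact: (@le_bigmax _ _ _ 0 (fun i : 'I_n => `|x i ord0|) i). Qed.

Lemma normInf_le (R : realType) n (x : 'cV[R]_n) d : 0 <= d ->
  (forall i, `|x i ord0| <= d) -> normInf x <= d.
Proof. by move=> d0 H; apply: bigmax_le. Qed.

Lemma normInf_ge0 (R : realType) n (x : 'cV[R]_n) : 0 <= normInf x.
Proof. by rewrite /normInf; elim/big_ind: _ => //= a b ha hb; rewrite le_max ha. Qed.

Lemma cbound (R : realType) n (Om : set 'cV[R]_n) : compact Om ->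
  exists M, 0 <= M /\ forall x, Om x -> forall i, `|x i ord0| <= M.
Proof.
move=> /compact_bounded [M0 [M0r HM]].
exists (Num.max 0 (M0 + 1)); split; first by rewrite le_max lexx.
move=> x Ox i; apply: le_trans (coord_le_norm x i) _.
apply: le_trans (HM (M0 + 1) _ x Ox) _; last by rewrite le_max lexx orbT.
by rewrite ltrDl.
Qed.

Theorem theorem3p2 (R : realType) (nin : nat) (Om : set 'cV[R]_nin)
  (f : 'cV[R]_nin -> R) :
  compact Om -> {within Om, continuous f} ->
  forall eps : R, 0 < eps ->
  (exists N : LIFSNN R nin 2 1,
      LIF_valid N /\ forall x, Om x -> `|realize N x - f x| <= eps) /\
  (forall Gamma : R,
     (forall x y, Om x -> Om y -> `|f x - f y| <= Gamma * normInf (x - y)) ->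
     let k : int := Num.ceil (diamInf Om / eps * Gamma) in
     exists N : LIFSNN R nin 2 1,
       LIF_valid N /\ (forall x, Om x -> `|realize N x - f x| <= eps) /\
       width N 0 = ((`|Num.max k 1| + 1) * nin)%N /\
       width N 1 = `|Num.max (k ^+ nin) 1|%N).
Proof.
move=> cOm fc eps e0.
have [M [M0 HM]] := cbound cOm.
have coordB (x y : 'cV[R]_nin) i : (x - y) i ord0 = x i ord0 - y i ord0 by rewrite !mxE.
split.
  have [d d0 Hd] := UC cOm fc e0.
  pose h := d / 2.
  have h0 : 0 < h by rewrite /h divr_gt0.
  pose k := (Num.truncn (2 * M / h)).+1.
  have hk : 2 * M < k%:R * h.
    by rewrite -ltr_pdivrMr // /k; apply: truncnS_gt.
  have hb : forall x y, Om x -> Om y -> forall i, y i ord0 - x i ord0 <= k%:R * h.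
    move=> x y Ox Oy i.
    have := HM x Ox i; have := HM y Oy i.
    rewrite !ler_norml => /andP[? ?] /andP[? ?]; lra.
  have hp : forall x y, Om x -> Om y -> (forall i, `|x i ord0 - y i ord0| <= h) -> `|f x - f y| <= eps.
    move=> x y Ox Oy hc; apply: Hd => //.
    apply: le_lt_trans (norm_le_coord (ltW h0) _) _; first by move=> i; rewrite coordB.
    rewrite /h; lra.
  have [N [vN [aN _]]] := @final R nin Om f eps k h isT h0 hb hp.
  by exists N.
move=> Gamma HL k.
pose D := diamInf Om.
have DE : forall x y, Om x -> Om y -> normInf (x - y) <= D.
  move=> x y Ox Oy; apply: ub_le_sup; last by exists x, y.
  exists (M + M) => r [u [v [Ou [Ov ->]]]].
  apply: normInf_le; first by rewrite addr_ge0.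
  move=> i; rewrite coordB; apply: le_trans (ler_normB _ _) _.
  by apply: lerD; apply: HM.
have Dle c : 0 <= c -> (forall x y, Om x -> Om y -> normInf (x - y) <= c) -> D <= c.
  move=> c0 Hc; case: (pselect (exists x, Om x)) => [[x Ox]|ne].
    apply: ge_sup; first by exists (normInf (x - x)), x, x.
    by move=> r [u [v [Ou [Ov ->]]]]; apply: Hc.
  rewrite /D /diamInf (_ : [set d | _] = set0) ?sup0 //.
  apply/seteqP; split => // r [x [y [Ox _]]]; exfalso; apply: ne; by exists x.
have D0 : 0 <= D.
  case: (pselect (exists x, Om x)) => [[x Ox]|ne].
    exact: le_trans (normInf_ge0 _) (DE _ _ Ox Ox).
  rewrite /D /diamInf (_ : [set d | _] = set0) ?sup0 //.
  apply/seteqP; split => // r [x [y [Ox _]]]; exfalso; apply: ne; by exists x.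
have DG : 0 <= D * Gamma.
  case: (lerP 0 Gamma) => G0; first exact: mulr_ge0.
  suff -> : D = 0 by rewrite mul0r.
  apply/eqP; rewrite eq_le D0 andbT; apply: Dle => // x y Ox Oy.
  have := HL x y Ox Oy; have := normr_ge0 (f x - f y); have := normInf_ge0 (x - y).
  nra.
have kge0 : 0 <= k.
  rewrite /k real_ceil_ge0 ?num_real // mulrAC.
  have : 0 <= D * Gamma / eps by rewrite divr_ge0 // ltW.
  rewrite -/D => ?; lra.
have [k1|k1] := lerP 1 k.
  pose kk := `|k|%N.
  have kE : k = kk%:Z by rewrite /kk gez0_abs.
  have kk1 : (0 < kk)%N by rewrite -(ltz_nat 0) -kE (lt_le_trans ltr01).
  have kkR : 0 < kk%:R :> R by rewrite ltr0n.
  have pos : 0 < D * Gamma.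
    have : 0 < k by apply: lt_le_trans k1.
    rewrite /k ceil_gt0 mulrAC => H.
    rewrite -/D in H; have := mulr_gt0 H e0.
    by rewrite divfK ?gt_eqF.
  have Dp : 0 < D.
    rewrite lt_def D0 andbT; apply/negP => /eqP D00.
    by move: pos; rewrite D00 mul0r ltxx.
  have Gp : 0 < Gamma by rewrite -(pmulr_rgt0 _ Dp).
  pose h := D / kk%:R.
  have h0 : 0 < h by rewrite divr_gt0.
  have hb : forall x y, Om x -> Om y -> forall i, y i ord0 - x i ord0 <= kk%:R * h.
    move=> x y Ox Oy i; rewrite /h mulrC divfK ?gt_eqF //.
    apply: le_trans (DE y x Oy Ox); apply: le_trans (normInf_ge _ i).
    by rewrite coordB ler_norm.
  have hp : forall x y, Om x -> Om y -> (forall i, `|x i ord0 - y i ord0| <= h) -> `|f x - f y| <= eps.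
    move=> x y Ox Oy hc; apply: le_trans (HL x y Ox Oy) _.
    have nh : normInf (x - y) <= h by apply: normInf_le (ltW h0) _ => i; rewrite coordB.
    apply: le_trans (ler_wpM2l (ltW Gp) nh) _.
    have := real_ceil_ge (num_real (D / eps * Gamma)).
    rewrite -/k kE mulrAC ler_pdivrMr // => H.
    rewrite /h mulrA (mulrC Gamma D) ler_pdivrMr //.
    by rewrite [eps * _]mulrC; exact: H.
  have [N [vN [aN [w0 w1]]]] := @final R nin Om f eps kk h kk1 h0 hb hp.
  exists N; split => //; split => //; split.
    by rewrite w0 addn1.
  rewrite w1 max_l; first by rewrite abszX.
  exact: (exprn_ege1 nin k1).
have k0 : k = 0 by apply/eqP; rewrite eq_le kge0 andbT -ltzD1.
pose h := Num.max D 1.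
have h0 : 0 < h by rewrite lt_max ltr01 orbT.
have hb : forall x y, Om x -> Om y -> forall i, y i ord0 - x i ord0 <= 1%:R * h.
  move=> x y Ox Oy i; rewrite mul1r /h le_max; apply/orP; left.
  apply: le_trans (DE y x Oy Ox); apply: le_trans (normInf_ge _ i).
  by rewrite coordB ler_norm.
have hp : forall x y, Om x -> Om y -> (forall i, `|x i ord0 - y i ord0| <= h) -> `|f x - f y| <= eps.
  move=> x y Ox Oy _; apply: le_trans (HL x y Ox Oy) _.
  have n0 := normInf_ge0 (x - y); have nD := DE x y Ox Oy.
  case: (lerP Gamma 0) => G0.
    by apply: le_trans (ltW e0); apply: mulr_le0_ge0.
  have : k <= 0 by rewrite k0.
  rewrite /k real_ceil_le0 ?num_real // mulrAC pmulr_lle0 ?invr_gt0 // => H.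
  rewrite -/D in H; nra.
have [N [vN [aN [w0 w1]]]] := @final R nin Om f eps 1 h isT h0 hb hp.
exists N; split => //; split => //; split.
  by rewrite w0.
by rewrite w1 k0 expr0n exp1n; case: (nin == 0%N).
Qed.
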